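(* Let $Q:(-\infty,-1)\to(-\infty,0)$ be the inverse of the strictly increasing function $G\mapsto G-e^G$ on $(-\infty,0)$, and define $R:\mathbb{R}\to\mathbb{R}$ by $R(V)=-2(1-e^{Q(V)})^2$ for $V<-1$ and $R(V)=4(V+1)$ for $V\ge -1$. Fix $m<-1$. For $n\in\mathbb{R}$ let $V(t;n)$ denote the unique solution of $V''+3V'=R(V)$, $t>0$, $V(0)=m$, $V'(0)=n$ (prime denoting $d/dt$, $V_t=dV/dt$). Define $\beta^0=\{n\in\mathbb{R}: V_t(t;n)>0 \text{ and } V(t;n)\le -1 \text{ for all } t>0\}$. If $n\in\beta^0$, then $V(t;n)\to -1$ as $t\to\infty$. *)

(* Defs.v *)
From Stdlib Require Import Reals.
From Coquelicot Require Import Coquelicot.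
Open Scope R_scope.

(* The nonlinearity R of the paper, parameterized by the function Q
   (the inverse of G |-> G - exp G on (-oo,0)), which the theorem
   characterizes by hypothesis. *)
Definition Rnl (Q : R -> R) (V : R) : R :=
  if Rlt_dec V (-1) then -2 * (1 - exp (Q V)) ^ 2 else 4 * (V + 1).

(* Main.v *)
Require Import Defs.
From Stdlib Require Import Reals Lra Psatz.
From Coquelicot Require Import Coquelicot.
Open Scope R_scope.

Lemma mvt_pos (f df : R -> R) (a b : R) :
  (forall t, 0 < t -> is_derive f t (df t)) -> 0 < a -> a <= b ->
  exists c, a <= c <= b /\ f b - f a = df c * (b - a).
Proof.
  intros Hd Ha Hab.
  destruct (MVT_gen f a b df) as [c [Hc Heq]].
  - intros x Hx. apply Hd. rewrite Rmin_left in Hx by lra. lra.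
  - intros x Hx. rewrite Rmin_left in Hx by lra.
    apply continuity_pt_filterlim. apply (ex_derive_continuous (K:=R_AbsRing) (V:=R_NormedModule)).
    exists (df x). apply Hd. lra.
  - exists c. rewrite Rmin_left in Hc by lra. rewrite Rmax_right in Hc by lra. auto.
Qed.

Lemma Rnl_bound (Q : R -> R)
  (hQ : forall v, v < -1 -> Q v < 0 /\ Q v - exp (Q v) = v)
  (eps v : R) : 0 < eps -> v <= -1 - eps ->
  Rnl Q v <= -2 * Rmin (1/4) (eps/2).
Proof.
  intros He Hv. unfold Rnl. destruct (Rlt_dec v (-1)) as [Hl|Hl]; [|lra].
  destruct (hQ v Hl) as [Hq Heq].
  set (q := Q v) in *. set (x := exp q) in *.
  assert (Hx0 : 0 < x) by apply exp_pos.
  assert (Hx1 : x < 1).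
  { unfold x. rewrite <- exp_0. apply exp_increasing. lra. }
  assert (H1 : 1 - q < / x).
  { unfold x. rewrite <- exp_Ropp. replace (1 - q) with (1 + - q) by ring.
    apply exp_ineq1. lra. }
  assert (H2 : (1 - q) * x < 1).
  { apply Rmult_lt_compat_r with (r := x) in H1; auto.
    rewrite Rinv_l in H1 by lra. lra. }
  assert (H3 : (1 - x) ^ 2 >= eps * x) by nra.
  destruct (Rle_dec x (1/2)).
  - assert (Rmin (1/4) (eps/2) <= 1/4) by apply Rmin_l. nra.
  - assert (Rmin (1/4) (eps/2) <= eps/2) by apply Rmin_r. nra.
Qed.

Theorem lemma4p4
  (Q : R -> R)
  (hQ : forall v, v < -1 -> Q v < 0 /\ Q v - exp (Q v) = v)
  (m n : R) (hm : m < -1)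
  (V W : R -> R)  (* W plays the role of V_t *)
  (hV0 : V 0 = m) (hW0 : W 0 = n)
  (hVc0 : filterlim V (at_right 0) (locally m))
  (hWc0 : filterlim W (at_right 0) (locally n))
  (hVd : forall t, 0 < t -> is_derive V t (W t))
  (hWd : forall t, 0 < t -> is_derive W t (Rnl Q (V t) - 3 * W t))
  (hbeta : forall t, 0 < t -> W t > 0 /\ V t <= -1) :
  is_lim V p_infty (-1).
Proof.
  apply is_lim_spec. intros eps. simpl.
  assert (Hmono : forall a b, 0 < a -> a <= b -> V a <= V b).
  { intros a b Ha Hab. destruct (mvt_pos V W a b hVd Ha Hab) as [c [Hc E]].
    destruct (hbeta c ltac:(lra)). nra. }
  destruct (Classical_Prop.classic (exists t0, 0 < t0 /\ -1 - eps < V t0)) as [[t0 [Ht0 Hv]]|Hn].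
  - exists t0. intros y Hy. destruct (hbeta y ltac:(lra)) as [_ Hy1].
    pose proof (Hmono t0 y Ht0 ltac:(lra)). apply Rabs_def1; lra.
  - exfalso. pose proof (cond_pos eps) as He.
    assert (Hall : forall t, 0 < t -> V t <= -1 - eps).
    { intros t Ht. destruct (Rle_dec (V t) (-1 - eps)); auto.
      exfalso. apply Hn. exists t. split; lra. }
    set (k := Rmin (1/4) (eps/2)).
    assert (Hk : 0 < k).
    { unfold k. apply Rmin_case; lra. }
    set (T := 1 + W 1 / (2 * k) + 1).
    destruct (hbeta 1 ltac:(lra)) as [HW1 _].
    assert (HT : 1 <= T).
    { unfold T. assert (0 < W 1 / (2 * k)) by (apply Rdiv_lt_0_compat; lra). lra. }
    destruct (mvt_pos W _ 1 T hWd ltac:(lra) HT) as [c [Hc E]].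
    pose proof (Rnl_bound Q hQ eps (V c) He (Hall c ltac:(lra))) as Hb.
    fold k in Hb. destruct (hbeta c ltac:(lra)) as [HWc _].
    destruct (hbeta T ltac:(lra)) as [HWT _].
    assert (W T - W 1 <= - 2 * k * (T - 1)) by nra.
    assert (2 * k * (T - 1) > W 1).
    { unfold T. field_simplify; try lra. }
    lra.
Qed.
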